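(* Let $m,n,s,k,c$ be positive integers such that $nc$ is even and $k$ is odd. If $\Gamma$ is an abelian group of order $nkc$ having exactly one involution, then there is no $\mathrm{MRS}_\Gamma(m,n;s,k;c)$.
   Context: For positive integers $m,n,s,k,c$ and an abelian group $\Gamma$ of order $nkc$, an $\mathrm{MRS}_\Gamma(m,n;s,k;c)$ is a set of $c$ partially filled $m\times n$ arrays (some cells may be empty) with entries in $\Gamma$ such that: every element of $\Gamma$ appears exactly once and in a unique array; in every array each row contains exactly $s$ filled cells and each column contains exactly $k$ filled cells; and there exist $\omega,\delta\in\Gamma$ such that in every array the sum of the entries of each row is $\omega$ and the sum of the entries of each column is $\delta$. An involution is an element of order $2$. *)

(* Defs.v *)
From HB Require Import structures.
From mathcomp Require Import all_boot all_order all_algebra.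
Set Implicit Arguments. Unset Strict Implicit. Unset Printing Implicit Defensive.
Import GRing.Theory.
Local Open Scope ring_scope.

(* An (partially filled) m x n array with entries in G is a function
   'I_m -> 'I_n -> option G (None = empty cell). *)

Definition arrays (G : finZmodType) (c m n : nat) :=
  'I_c -> 'I_m -> 'I_n -> option G.

Definition cellv (G : finZmodType) (x : option G) : G := odflt 0 x.

Definition involution (G : finZmodType) (x : G) : bool :=
  (x != 0) && (x + x == 0).

Definition is_MRS (G : finZmodType) (m n s k c : nat) (A : arrays G c m n) : Prop :=
  (forall g : G,
     #|[set t : 'I_c * 'I_m * 'I_n | A t.1.1 t.1.2 t.2 == Some g]| = 1%N) /\
  (forall (a : 'I_c) (i : 'I_m), #|[set j : 'I_n | A a i j != None]| = s) /\
  (forall (a : 'I_c) (j : 'I_n), #|[set i : 'I_m | A a i j != None]| = k) /\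
  (exists omega delta : G,
     (forall (a : 'I_c) (i : 'I_m), \sum_(j < n) cellv (A a i j) = omega) /\
     (forall (a : 'I_c) (j : 'I_n), \sum_(i < m) cellv (A a i j) = delta)).

(* Main.v *)
Require Import Defs.
From HB Require Import structures.
From mathcomp Require Import all_boot all_order all_algebra.
From mathcomp Require Import zify.
Import GRing.Theory.
Local Open Scope ring_scope.

Lemma mulr_card (G : finZmodType) (x : G) : x *+ #|G| = 0.
Proof.
have := reindex_inj (addIr x) (op := +%R) (x := 0) (P := xpredT) (F := fun g : G => g).
rewrite big_split /= sumr_const => /eqP.
by rewrite -{1}(addr0 (\sum_i i)) (inj_eq (addrI _)) eq_sym => /eqP.
Qed.

Lemma sum_all (G : finZmodType) :
  \sum_(g : G) g = \sum_(g : G | g + g == 0) g.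
Proof.
pose P (x : G) := (enum_rank x < enum_rank (- x))%N.
rewrite (bigID P) /=.
rewrite (reindex_inj (@oppr_inj G)) /= sumrN.
have -> : \sum_(j | ~~ P j) j = \sum_(j | P (- j)) j + \sum_(g | g + g == 0) g.
  rewrite (bigID (fun j => P (- j)) (fun j => ~~ P j)) /=.
  congr (_ + _).
  - apply: eq_bigl => j; rewrite /P opprK.
    by case: (ltngtP (enum_rank j) (enum_rank (-j))).
  - apply: eq_bigl => j; rewrite /P opprK.
    case: (ltngtP (enum_rank j) (enum_rank (-j))) => /=.
    + move=> h; apply/esym/negP => /eqP.
      by move/(canRL (addrK j)); rewrite sub0r => e; move: h; rewrite -e ltnn.
    + by move=> h; apply/esym/negP => /eqP /(canRL (addrK j)); rewrite sub0r => e; move: h; rewrite -e ltnn.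
    + move=> /val_inj/enum_rank_inj e; apply/esym/eqP.
      by rewrite {1}e addNr.
by rewrite addKr.
Qed.

Lemma cellv_sum (G : finZmodType) (x : option G) :
  cellv x = \sum_(g : G) g *+ (x == Some g).
Proof.
case: x => [h|] /=; last by rewrite big1.
rewrite (bigD1 h) //= eqxx mulr1n big1 ?addr0 // => g hg.
by case: eqP => // [[e]]; rewrite e eqxx in hg.
Qed.

Theorem lemma3p6 (m n s k c : nat) (G : finZmodType) :
  (0 < m)%N -> (0 < n)%N -> (0 < s)%N -> (0 < k)%N -> (0 < c)%N ->
  ~~ odd (n * c) -> odd k ->
  #|G| = (n * k * c)%N ->
  #|[set x : G | involution x]| = 1%N ->
  ~ (exists A : arrays G c m n, is_MRS s k A).
Proof.
move=> _ _ _ _ _ _ kodd cardG /eqP/cards1P [iota hI] [A [Hall [_ [_ [om [de [_ Hcol]]]]]]].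
have inv_iota : involution iota by rewrite -in_set hI set11 ?inE.
have Fsum : \sum_(g : G | g + g == 0) g = iota.
  rewrite (bigD1 0) ?addr0 //= add0r (big_pred1 iota) // => g /=.
  have := congr1 (fun S : {set G} => g \in S) hI; rewrite /= !inE => <-. by rewrite /involution andbC.
have Ssum : \sum_(g : G) g = \sum_(t : 'I_c * 'I_m * 'I_n) cellv (A t.1.1 t.1.2 t.2).
  under [RHS]eq_bigr => t _ do rewrite cellv_sum.
  rewrite exchange_big /=; apply: eq_bigr => g _.
  rewrite sumrMnr -[LHS]mulr1n; congr (_ *+ _).
  rewrite -(Hall g) -sum1_card big_mkcond /=; apply: eq_bigr => t _; rewrite inE; by case: (_ == _).
have Csum : \sum_(t : 'I_c * 'I_m * 'I_n) cellv (A t.1.1 t.1.2 t.2) = de *+ (c * n).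
  rewrite -(pair_bigA _ (fun (p : 'I_c * 'I_m) (j : 'I_n) => cellv (A p.1 p.2 j))) /=.
  rewrite -(pair_bigA _ (fun (a : 'I_c) (i : 'I_m) => \sum_j cellv (A a i j))) /=.
  under eq_bigr => a _ do rewrite exchange_big /=.
  under eq_bigr => a _ do under eq_bigr => j _ do rewrite Hcol.
  by rewrite sumr_const card_ord sumr_const card_ord -mulrnA mulnC.
have e : iota = de *+ (c * n) by rewrite -Fsum -sum_all Ssum Csum.
have hii : iota + iota = 0 by case/andP: inv_iota => _ /eqP.
have hk : iota *+ k = 0.
  rewrite e -mulrnA -(@mulr_card G de) cardG. congr (_ *+ _); lia.
have hk' : iota *+ k = iota.
  rewrite -(odd_double_half k) kodd add1n mulrS -mul2n mulrnA mulr2n hii mul0rn addr0 //.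
case/andP: inv_iota => /eqP nz _; apply: nz; by rewrite -hk' hk.
Qed.
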